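(* Let $b\in[0,1]$ with $b\neq\frac12$, and define $f_b:[0,1]\to[0,1]$ by $$f_b(x)=\begin{cases} x, & x\in[0,\frac13]\cup[\frac23,1],\\ (1-2b)x^2+2bx, & x\in(\frac13,\frac23).\end{cases}$$ Let $f_b^n$ denote the $n$-fold composition of $f_b$ with itself. Then: 1. The set of fixed points of $f_b$ is $[0,\frac13]\cup[\frac23,1]$. 2. If $0\le b<\frac12$, then for every $x^{(0)}\in(\frac13,\frac23)$ there exist $n\in\mathbb N$ and $p\in[\frac19(1+4b),\frac13]$ such that $f_b^n(x^{(0)})=p$ and $f_b^{n+1}(x^{(0)})=f_b(p)=p$. 3. If $\frac12<b\le1$, then for every $x^{(0)}\in(\frac13,\frac23)$ there exist $n\in\mathbb N$ and $p\in[\frac23,\frac49(1+b)]$ such that $f_b^n(x^{(0)})=p$ and $f_b^{n+1}(x^{(0)})=f_b(p)=p$.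
   Context: This map is the reduction to $[0,1]$ of the quadratic stochastic operator $x'=x^2+2p(x)xy$, $y'=2(1-p(x))xy+y^2$ (with $y=1-x$), where $p(x)=a$ for $x\le\frac13$, $b$ for $\frac13<x<\frac23$, $c$ for $x\ge\frac23$, in the case $a=c=\frac12$. *)

(* Defs.v *)
From Stdlib Require Import Reals Lra.
Open Scope R_scope.

(* The map f_b on [0,1]: identity on [0,1/3] and [2/3,1],
   (1-2b)x^2 + 2bx on (1/3,2/3).  Defined on all of R (values outside
   [0,1] are irrelevant: the statement only uses x in [0,1]). *)
Definition f_b (b x : R) : R :=
  if Rle_dec x (1/3) then x
  else if Rle_dec (2/3) x then x
  else (1 - 2*b) * x^2 + 2*b*x.

Fixpoint f_b_iter (b : R) (n : nat) (x : R) : R :=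
  match n with
  | O => x
  | S m => f_b b (f_b_iter b m x)
  end.

(* Main.v *)
Require Import Defs.
From Stdlib Require Import Reals Lra Psatz.
Open Scope R_scope.

Lemma iter_shift b n x : f_b_iter b n (f_b b x) = f_b_iter b (S n) x.
Proof.
  induction n as [|n IH]; simpl; [reflexivity|]. simpl in IH. rewrite IH. reflexivity.
Qed.

Lemma f_mid b x : 1/3 < x < 2/3 -> f_b b x = (1 - 2*b) * x^2 + 2*b*x.
Proof.
  intros H. unfold f_b. destruct (Rle_dec x (1/3)); [lra|].
  destruct (Rle_dec (2/3) x); [lra|]. reflexivity.
Qed.

Lemma f_low b x : x <= 1/3 -> f_b b x = x.
Proof. intros H. unfold f_b. destruct (Rle_dec x (1/3)); [reflexivity|lra]. Qed.

Lemma f_high b x : 2/3 <= x -> f_b b x = x.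
Proof. intros H. unfold f_b. destruct (Rle_dec x (1/3)); [reflexivity|].
  destruct (Rle_dec (2/3) x); [reflexivity|lra]. Qed.

Lemma down b (hb0 : 0 <= b) (hb : b < 1/2) : forall k x, 1/3 < x < 2/3 ->
  x < 1/3 + INR k * ((1-2*b)*(2/9)) ->
  exists (n : nat) (p : R), (1/9) * (1 + 4*b) <= p <= 1/3 /\
       f_b_iter b n x = p /\ f_b b p = p.
Proof.
  induction k as [|k IH]; intros x Hx Hk.
  - simpl in Hk. lra.
  - rewrite S_INR in Hk.
    pose proof (f_mid b x Hx) as E.
    assert (Q : 0 < (x - 1/3)*(2/3 - x)) by (apply Rmult_lt_0_compat; lra).
    assert (Hd : (1 - 2*b) * x^2 + 2*b*x <= x - (1-2*b)*(2/9)).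
    { assert (0 <= (1-2*b) * ((x - 1/3)*(2/3 - x))) by (apply Rmult_le_pos; lra). nra. }
    assert (Hg : (1/9)*(1+4*b) < (1 - 2*b) * x^2 + 2*b*x).
    { assert (0 < (x-1/3) * ((1-2*b)*(x+1/3)+2*b)) by (apply Rmult_lt_0_compat; nra). nra. }
    destruct (Rle_dec (f_b b x) (1/3)) as [Hl|Hl].
    + exists 1%nat, (f_b b x). split; [lra|]. split; [reflexivity|].
      apply f_low; lra.
    + destruct (IH (f_b b x)) as [n [p [Hp [Hn Hf]]]]; [lra|lra|].
      exists (S n), p. rewrite <- iter_shift. auto.
Qed.

Lemma up b (hb1 : b <= 1) (hb : 1/2 < b) : forall k x, 1/3 < x < 2/3 ->
  2/3 - INR k * ((2*b-1)*(2/9)) < x ->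
  exists (n : nat) (p : R), 2/3 <= p <= (4/9) * (1 + b) /\
       f_b_iter b n x = p /\ f_b b p = p.
Proof.
  induction k as [|k IH]; intros x Hx Hk.
  - simpl in Hk. lra.
  - rewrite S_INR in Hk.
    pose proof (f_mid b x Hx) as E.
    assert (Q : 0 < (x - 1/3)*(2/3 - x)) by (apply Rmult_lt_0_compat; lra).
    assert (Hd : (1 - 2*b) * x^2 + 2*b*x >= x + (2*b-1)*(2/9)).
    { assert (0 <= (2*b-1) * ((x - 1/3)*(2/3 - x))) by (apply Rmult_le_pos; lra). nra. }
    assert (Hg : (1 - 2*b) * x^2 + 2*b*x < (4/9)*(1+b)).
    { assert (0 < (2/3-x) * ((1-2*b)*(x+2/3)+2*b)) by (apply Rmult_lt_0_compat; nra). nra. }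
    destruct (Rle_dec (2/3) (f_b b x)) as [Hl|Hl].
    + exists 1%nat, (f_b b x). split; [lra|]. split; [reflexivity|].
      apply f_high; lra.
    + destruct (IH (f_b b x)) as [n [p [Hp [Hn Hf]]]]; [lra|lra|].
      exists (S n), p. rewrite <- iter_shift. auto.
Qed.

Theorem theorem2p2 (b : R) (hb0 : 0 <= b) (hb1 : b <= 1) (hb : b <> 1/2) :
  (forall x : R, 0 <= x <= 1 ->
     (f_b b x = x <-> (0 <= x <= 1/3 \/ 2/3 <= x <= 1))) /\
  (b < 1/2 -> forall x0 : R, 1/3 < x0 < 2/3 ->
     exists (n : nat) (p : R), (1/9) * (1 + 4*b) <= p <= 1/3 /\
       f_b_iter b n x0 = p /\ f_b_iter b (S n) x0 = f_b b p /\ f_b b p = p) /\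
  (1/2 < b -> forall x0 : R, 1/3 < x0 < 2/3 ->
     exists (n : nat) (p : R), 2/3 <= p <= (4/9) * (1 + b) /\
       f_b_iter b n x0 = p /\ f_b_iter b (S n) x0 = f_b b p /\ f_b b p = p).
Proof.
  split; [|split].
  - intros x Hx. split.
    + intros H. destruct (Rle_dec x (1/3)); [lra|].
      destruct (Rle_dec (2/3) x); [lra|].
      exfalso. rewrite f_mid in H by lra.
      assert (H2 : (1-2*b) * (x * (x - 1)) = 0) by nra.
      apply Rmult_integral in H2. destruct H2 as [H2|H2]; [lra|].
      apply Rmult_integral in H2. lra.
    + intros [H|H]; [apply f_low|apply f_high]; lra.
  - intros Hb x0 Hx.
    destruct (archimed_cor1 (3*((1-2*b)*(2/9)))) as [N [HN HN0]]; [lra|].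
    assert (HI : 0 < INR N) by (apply lt_0_INR; lia).
    assert (1 < INR N * (3*((1-2*b)*(2/9)))).
    { apply (Rmult_lt_compat_l (INR N)) in HN; auto.
      rewrite Rinv_r in HN; lra. }
    destruct (down b hb0 Hb N x0 Hx) as [n [p [Hp [Hn Hf]]]]; [lra|].
    exists n, p. simpl. rewrite Hn. auto.
  - intros Hb x0 Hx.
    destruct (archimed_cor1 (3*((2*b-1)*(2/9)))) as [N [HN HN0]]; [lra|].
    assert (HI : 0 < INR N) by (apply lt_0_INR; lia).
    assert (1 < INR N * (3*((2*b-1)*(2/9)))).
    { apply (Rmult_lt_compat_l (INR N)) in HN; auto.
      rewrite Rinv_r in HN; lra. }
    destruct (up b hb1 Hb N x0 Hx) as [n [p [Hp [Hn Hf]]]]; [lra|].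
    exists n, p. simpl. rewrite Hn. auto.
Qed.
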